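(* Let $A$, $Q$ and $H\subseteq A^Q$ be non-empty finite sets, $n\ge3$ a natural number, and $\mathcal F$ a clone with carrier $A$ satisfying $\Delta^s_n$. Then $H\in\mathrm{Inv}_Q\mathcal F$ if and only if both of the following hold: (1) $H|_P\in\mathrm{Inv}_P\mathcal F$ for all $P\in[Q]^1\cup[Q]^{2,0}_H\cup\{Q^{(n)}_H\}$; (2) $H$ is decomposable over $[Q]^1\cup[Q]^{2,0}_H\cup\{Q^{(n)}_H\}$.
   Context: $\mathcal O(A)=\bigcup_{n<\omega}A^{A^n}$; $\mathcal F_{[n]}=\mathcal F\cap A^{A^n}$. Elements of $A^n$ are sequences $\mathbf x=x_0\dots x_{n-1}$; $\mathrm{ran}\,\mathbf x$ is the set of entries; $A^n_k=\{\mathbf x:|\mathrm{ran}\,\mathbf x|=k\}$, $A^n_{<n}=\bigcup_{k<n}A^n_k$. A clone with carrier $A$ is a subset of $\mathcal O(A)$ containing all projections and closed under composition. For $f\in\mathcal O(A)_{[m]}$ and $h_i\in A^Q$, $f(h_0,\dots,h_{m-1})$ is $q\mapsto f(h_0(q)\dots h_{m-1}(q))$; $\mathrm{Inv}_Q\mathcal F$ is the set of $H\subseteq A^Q$ closed under all such compositions with $f\in\mathcal F$. $h|_P$ is the restriction of $h$ to $P\cap\mathrm{dom}\,h$, $H|_P=\{h|_P:h\in H\}$, $H(q)=\{h(q):h\in H\}$. For $R\subseteq Q$, $(H|_R)|^Q=\{f\in A^Q:f|_R\in H|_R\}$; $H$ is decomposable over $\mathscr R\subseteq\mathscr P(Q)$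 if $H=\bigcap_{R\in\mathscr R}(H|_R)|^Q$. $[Q]^k$ is the set of $k$-element subsets of $Q$; $S_A$ the set of permutations of $A$. $[Q]^{2,0}_H$ is the set of $\{p,q\}\in[Q]^2$ for which there is $\sigma\in S_A$ with $h(q)=\sigma(h(p))$ for all $h\in H$. $Q^{(n)}_H=\{q\in Q:|H(q)|<n\}$. $\mathcal F$ satisfies $\Delta^s_n$ if there is $i<n$ such that for every $\mathbf a\in A^n_n$ and every $a\in\mathrm{ran}\,\mathbf a$ there is $s\in\mathcal F_{[n]}$ with $s(\mathbf a)=a$ and $s(\mathbf x)=x_i$ for all $\mathbf x=x_0\dots x_{n-1}\in A^n_{<n}$. *)

(* Defs.v *)
From HB Require Import structures.
From mathcomp Require Import all_boot all_fingroup.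
Set Implicit Arguments. Unset Strict Implicit. Unset Printing Implicit Defensive.

Definition op (A : finType) (m : nat) := {ffun {ffun 'I_m -> A} -> A}.

Definition opfam (A : finType) := forall m : nat, {set op A m}.

Definition is_clone (A : finType) (F : opfam A) : Prop :=
  (forall m (i : 'I_m), [ffun x : {ffun 'I_m -> A} => x i] \in F m) /\
  (forall m k (f : op A m) (g : 'I_m -> op A k),
      f \in F m -> (forall i, g i \in F k) ->
      [ffun x : {ffun 'I_k -> A} => f [ffun i => g i x]] \in F k).

Definition ran (A : finType) (n : nat) (x : {ffun 'I_n -> A}) : {set A} :=
  [set x i | i : 'I_n].

Definition Delta_s (A : finType) (F : opfam A) (n : nat) : Prop :=
  exists i : 'I_n,
    forall a : {ffun 'I_n -> A}, #|ran a| = n ->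
    forall b, b \in ran a ->
      exists2 s : op A n, s \in F n &
        s a = b /\ (forall x : {ffun 'I_n -> A}, #|ran x| < n -> s x = x i).

Definition Inv (A P : finType) (F : opfam A) (H : {set {ffun P -> A}}) : Prop :=
  forall m (f : op A m) (h : 'I_m -> {ffun P -> A}),
    f \in F m -> (forall i, h i \in H) ->
    [ffun q : P => f [ffun i => h i q]] \in H.

Definition restr (A Q : finType) (R : {set Q}) (h : {ffun Q -> A})
  : {ffun {q : Q | q \in R} -> A} :=
  [ffun q => h (val q)].

Definition restr_set (A Q : finType) (R : {set Q}) (H : {set {ffun Q -> A}})
  : {set {ffun {q : Q | q \in R} -> A}} :=
  [set restr R h | h in H].

(* H is decomposable over RR:  H = \bigcap_{R in RR} (H|_R)|^Q *)
Definition decomposable (A Q : finType) (H : {set {ffun Q -> A}})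
  (RR : {set {set Q}}) : Prop :=
  forall f : {ffun Q -> A},
    f \in H <-> (forall R, R \in RR -> restr R f \in restr_set R H).

Definition sing_subsets (Q : finType) : {set {set Q}} :=
  [set P : {set Q} | #|P| == 1].

Definition pairs20 (A Q : finType) (H : {set {ffun Q -> A}}) : {set {set Q}} :=
  [set P | [exists p : Q, exists q : Q,
     [&& p != q, P == [set p; q] :> {set Q} &
        [exists s : {perm A}, [forall h : {ffun Q -> A}, (h \in H) ==> (h q == s (h p))]]]]].

Definition Qn (A Q : finType) (H : {set {ffun Q -> A}}) (n : nat) : {set Q} :=
  [set q : Q | #|[set h q | h : {ffun Q -> A} in H]| < n].

Definition decomp_family (A Q : finType) (H : {set {ffun Q -> A}}) (n : nat)
  : {set {set Q}} :=
  sing_subsets Q :|: pairs20 H :|: [set Qn H n].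

(* Main.v *)
Require Import Defs.
From HB Require Import structures.
From mathcomp Require Import all_boot all_fingroup.
Set Implicit Arguments. Unset Strict Implicit. Unset Printing Implicit Defensive.

Lemma ran_inj (A : finType) n (f : 'I_n -> A) :
  injective f -> #|ran [ffun j => f j]| = n.
Proof.
move=> fi; rewrite /ran.
have -> : [set [ffun j => f j] i | i : 'I_n] = [set f i | i : 'I_n].
  by apply/setP=> x; apply/imsetP/imsetP=> -[j _ ->]; exists j; rewrite ?ffunE.
by rewrite card_imset // card_ord.
Qed.

Lemma ran_lt (A : finType) n (x : {ffun 'I_n -> A}) j k :
  j != k -> x j = x k -> #|ran x| < n.
Proof.
move=> jk e; rewrite /ran ltn_neqAle.
have le : #|[set x i | i : 'I_n]| <= n by rewrite -[X in _ <= X]card_ord leq_imset_card.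
rewrite le andbT; apply/eqP=> E.
have : #|[set x i | i : 'I_n]| == #|'I_n|.
  by rewrite E card_ord.
move/imset_injP => inj.
by move/eqP: jk; apply; apply: inj.
Qed.

Definition Dprop (A : finType) (F : opfam A) n (i : 'I_n) :=
  forall a : {ffun 'I_n -> A}, #|ran a| = n ->
    forall b, b \in ran a ->
      exists2 s : op A n, s \in F n &
        s a = b /\ (forall x : {ffun 'I_n -> A}, #|ran x| < n -> s x = x i).

Lemma coreN (A Q : finType) (H : {set {ffun Q -> A}}) (F : opfam A) n (i : 'I_n)
  (HI : Inv F H) (HD : Dprop F i) (S : {set Q}) (q : Q)
  (U : 'I_n -> {ffun Q -> A}) :
  (forall j, U j \in H) -> injective (fun j => U j q) ->
  (forall x, x \in S -> #|ran [ffun j => U j x]| < n) ->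
  forall j0, exists2 w, w \in H & (forall x, x \in S -> w x = U i x) /\ w q = U j0 q.
Proof.
move=> UH Uinj Scol j0.
have jr : U j0 q \in ran [ffun j => U j q] by apply/imsetP; exists j0; rewrite ?ffunE.
have [s sF [sa sx]] := HD _ (ran_inj Uinj) _ jr.
exists [ffun x => s [ffun j => U j x]].
  by apply: HI.
split.
  by move=> x xS; rewrite ffunE sx ?ffunE // Scol.
by rewrite ffunE sa.
Qed.

Lemma fill (A : finType) n (V : {set A}) : n <= #|V| ->
  forall k (D : {set 'I_n}) (b : 'I_n -> A), #|~: D| = k ->
  {in D &, injective b} -> (forall j, j \in D -> b j \in V) ->
  exists a : 'I_n -> A, [/\ injective a, (forall j, a j \in V) &
                          forall j, j \in D -> a j = b j].
Proof.
move=> nV k; elim: k => [|k IH] D b cD binj bV.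
  have DT : forall j, j \in D.
    move=> j; apply/idPn=> jD.
    by move/eqP: cD; rewrite cards_eq0 => /eqP/setP/(_ j); rewrite !inE jD.
  exists b; split; [by move=> x y; apply: binj; rewrite DT | by move=> j; apply: bV | by []].
have [j0 j0D] : exists j0, j0 \in ~: D.
  by apply/set0Pn; rewrite -card_gt0 cD.
have cDlt : #|D| < n.
  have := cardsC D; rewrite cD card_ord => E; by rewrite -[X in _ < X]E addnS ltnS leq_addr.
have [v0 v0V] : exists v0, v0 \in V :\: b @: D.
  apply/set0Pn; apply/negP; rewrite setD_eq0 => /subset_leq_card sub.
  have := leq_trans nV (leq_trans sub (leq_imset_card _ _)).
  by rewrite leqNgt cDlt.
move: j0D v0V; rewrite !inE => j0D /andP[v0b v0V].
pose b' j := if j == j0 then v0 else b j.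
have [|||a [ai aV aD]] := IH (j0 |: D) b'.
- apply/eqP; rewrite -eqSS -cD (cardsD1 j0 (~: D)) inE j0D add1n eqSS.
  by rewrite setCU setDE setIC.
- move=> x y; rewrite !inE /b' => /orP[/eqP->|xD] /orP[/eqP->|yD]; rewrite ?eqxx //.
  + case: ifP => [/eqP -> //|_ e]; by rewrite e imset_f in v0b.
  + case: ifP => [/eqP -> //|_ e]; by rewrite -e imset_f in v0b.
  + case: ifP => [/eqP xj|_]; first by rewrite -xj xD in j0D.
    case: ifP => [/eqP yj|_]; first by rewrite -yj yD in j0D.
    exact: binj.
- move=> j; rewrite !inE /b' => /orP[/eqP->|jD]; rewrite ?eqxx //.
  by case: ifP => // _; apply: bV.
exists a; split => // j jD; rewrite aD ?inE ?jD ?orbT // /b'.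
by case: ifP => // /eqP jj; rewrite -jj jD in j0D.
Qed.

Definition Hq (A Q : finType) (H : {set {ffun Q -> A}}) (q : Q) : {set A} :=
  [set h q | h : {ffun Q -> A} in H].

Lemma Hq_pick (A Q : finType) (H : {set {ffun Q -> A}}) q c y0 :
  y0 \in H -> c \in Hq H q ->
  odflt y0 [pick h in H | h q == c] \in H /\ odflt y0 [pick h in H | h q == c] q = c.
Proof.
move=> y0H /imsetP[h hH ->]; case: pickP => [h' /andP[h'H /eqP e]|/(_ h)] //=.
by rewrite hH eqxx.
Qed.

Lemma core3 (A Q : finType) (H : {set {ffun Q -> A}}) (F : opfam A) n (i : 'I_n)
  (HI : Inv F H) (HD : Dprop F i) (n3 : 3 <= n) (S : {set Q}) (q : Q)
  (nq : n <= #|Hq H q|) y0 y1 y2 :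
  y0 \in H -> y1 \in H -> y2 \in H ->
  y0 q != y1 q -> y0 q != y2 q -> y1 q != y2 q ->
  (forall x, x \in S -> [\/ y0 x = y1 x, y0 x = y2 x | y1 x = y2 x]) ->
  exists2 w, w \in H & (forall x, x \in S -> w x = y0 x) /\ w q = y1 q.
Proof.
move=> y0H y1H y2H d01 d02 d12 col.
have [j1 j1i] : exists j1 : 'I_n, j1 \in [set~ i].
  by apply/set0Pn; rewrite -card_gt0 cardsC1 card_ord -ltnS prednK ?(leq_trans _ n3).
have [j2 j2D] : exists j2 : 'I_n, j2 \in ~: [set i; j1].
  apply/set0Pn; rewrite -card_gt0.
  have := cardsC [set i; j1]; rewrite card_ord cards2.
  rewrite !inE in j1i; rewrite eq_sym j1i /= => E.
  by rewrite -(ltn_add2l 2) addn0 E.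
rewrite !inE in j1i j2D; case/norP: j2D => j2i j2j1.
pose V j := if j == i then y0 else if j == j1 then y1 else y2.
have Vi : V i = y0 by rewrite /V eqxx.
have Vj1 : V j1 = y1 by rewrite /V (negbTE j1i) eqxx.
have Vj2 : V j2 = y2 by rewrite /V (negbTE j2i) (negbTE j2j1).
have VH j : V j \in H by rewrite /V; case: ifP => // _; case: ifP.
pose D := [set i; j1; j2].
have Dcase j : j \in D -> [\/ j = i, j = j1 | j = j2].
  rewrite !inE; case/orP => [/orP[] /eqP ->|/eqP ->]; [exact: Or31 | exact: Or32 | exact: Or33].
have [||a [ai aV aD]] := @fill _ _ _ nq _ D (fun j => V j q) (erefl _).
- move=> x y /Dcase[]-> /Dcase[]->; rewrite ?Vi ?Vj1 ?Vj2 // => /eqP;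
    rewrite ?(negbTE d01) ?(negbTE d02) ?(negbTE d12) //;
    rewrite eq_sym ?(negbTE d01) ?(negbTE d02) ?(negbTE d12) //.
- by move=> j _; apply: imset_f.
pose U j := if j \in D then V j else odflt y0 [pick h in H | h q == a j].
have UH j : U j \in H /\ U j q = a j.
  rewrite /U; case: ifP => jD; first by rewrite aD.
  by apply: Hq_pick.
have UD j : j \in D -> U j = V j by rewrite /U => ->.
have [|||w wH [wS wq]] := coreN HI HD (S := S) (q := q) (U := U) _ _ _ j1.
- by move=> j; case: (UH j).
- by move=> x y /=; rewrite (proj2 (UH x)) (proj2 (UH y)); apply: ai.
- move=> x xS; have iD : i \in D by rewrite !inE eqxx.
  have j1D : j1 \in D by rewrite !inE eqxx orbT.
  have j2D : j2 \in D by rewrite !inE eqxx orbT.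
  case: (col x xS) => e.
  + apply: (@ran_lt _ _ _ i j1); first by rewrite eq_sym.
    by rewrite !ffunE !UD // Vi Vj1.
  + apply: (@ran_lt _ _ _ i j2); first by rewrite eq_sym.
    by rewrite !ffunE !UD // Vi Vj2.
  + apply: (@ran_lt _ _ _ j1 j2); first by rewrite eq_sym.
    by rewrite !ffunE !UD // Vj1 Vj2.
exists w => //; split.
  by move=> x xS; rewrite wS // UD ?Vi // !inE eqxx.
by rewrite wq UD ?Vj1 // !inE eqxx orbT.
Qed.

Lemma three_pick (A : finType) (V : {set A}) a b : 3 <= #|V| ->
  exists2 e, e \in V & (e != a) && (e != b).
Proof.
move=> V3.
have [e] : exists e, e \in V :\: [set a; b].
  apply/set0Pn; rewrite -card_gt0 cardsD.
  have : #|V :&: [set a; b]| <= 2.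
    apply: leq_trans (subset_leq_card (subsetIr _ _)) _.
    by rewrite cards2; case: (a == b).
  move=> le; rewrite subn_gt0; apply: leq_ltn_trans le _; exact: leq_trans V3.
by rewrite !inE negb_or => /andP[/andP[ea eb] eV]; exists e; rewrite ?ea.
Qed.

Lemma stepA (A Q : finType) (H : {set {ffun Q -> A}}) (F : opfam A) n (i : 'I_n)
  (HI : Inv F H) (HD : Dprop F i) (n3 : 3 <= n) (S : {set Q}) (q : Q)
  (nq : n <= #|Hq H q|) u v h0 c :
  u \in H -> v \in H -> (forall x, x \in S -> u x = v x) -> u q != v q ->
  h0 \in H -> c \in Hq H q ->
  exists2 w, w \in H & (forall x, x \in S -> w x = h0 x) /\ w q = c.
Proof.
move=> uH vH uv duv h0H cH.
have A1 c' : c' \in Hq H q ->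
    exists2 w, w \in H & (forall x, x \in S -> w x = u x) /\ w q = c'.
  move=> /imsetP[z zH ->].
  have [e1|ne1] := eqVneq (u q) (z q); first by exists u.
  have [e2|ne2] := eqVneq (v q) (z q).
    by exists v => //; split => // x xS; rewrite uv.
  have [|||w wH [wS wq]] := @core3 _ _ _ _ _ _ HI HD n3 S _ nq _ _ _ vH zH uH ne2 _ _ _.
  - by rewrite eq_sym.
  - by rewrite eq_sym.
  - by move=> x xS; apply: Or32; rewrite uv.
  by exists w => //; split => // x xS; rewrite wS ?uv.
have [->|nc] := eqVneq c (h0 q); first by exists h0.
have [e eH /andP[e1 e2]] := three_pick (h0 q) c (leq_trans n3 nq).
have [w1 w1H [w1S w1q]] := A1 _ cH.
have [w2 w2H [w2S w2q]] := A1 _ eH.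
have [||||w wH [wS wq]] := @core3 _ _ _ _ _ _ HI HD n3 S _ nq _ _ _ h0H w1H w2H _ _ _ _.
- by rewrite w1q eq_sym.
- by rewrite w2q eq_sym.
- by rewrite w1q w2q eq_sym.
- by move=> x xS; apply: Or33; rewrite w1S ?w2S.
by exists w => //; rewrite wq.
Qed.

Definition linked (A Q : finType) (H : {set {ffun Q -> A}}) (r q : Q) : bool :=
  [exists s : {perm A}, [forall h : {ffun Q -> A}, (h \in H) ==> (h q == s (h r))]].

Lemma bij_linked (A Q : finType) (H : {set {ffun Q -> A}}) (r q : Q) :
  (forall u v, u \in H -> v \in H -> (u r = v r <-> u q = v q)) -> linked H r q.
Proof.
move=> hyp.
pose phi a := odflt a [pick c | [exists h in H, (h r == a) && (h q == c)]].
have phiE h : h \in H -> phi (h r) = h q.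
  move=> hH; rewrite /phi; case: pickP => [c /existsP[h' /and3P[h'H /eqP e1 /eqP e2]]|/(_ (h q))].
    by rewrite /= -e2; apply/esym/(hyp _ _ hH h'H).
  by move/existsP; case; exists h; rewrite hH !eqxx.
pose Vr := Hq H r; pose Vq := Hq H q.
have phi_inj : {in Vr &, injective phi}.
  move=> a b /imsetP[h hH ->] /imsetP[h' h'H ->]; rewrite !phiE //.
  by move/(hyp _ _ hH h'H).
have Vq_img : Vq = phi @: Vr.
  apply/setP=> c; apply/imsetP/imsetP.
    by case=> h hH ->; exists (h r); [exact: imset_f | rewrite phiE].
  by case=> _ /imsetP[h hH ->] ->; exists h; rewrite ?phiE.
have cVrq : #|Vr| = #|Vq| by rewrite Vq_img card_in_imset.
pose s1 := enum Vr ++ enum (~: Vr).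
pose s2 := map phi (enum Vr) ++ enum (~: Vq).
have s1all a : a \in s1 by rewrite mem_cat !mem_enum inE orbN.
have sz1 : size s1 = #|A| by rewrite size_cat -!cardE cardsC.
have sz2 : size s2 = #|A| by rewrite size_cat size_map -!cardE cVrq cardsC.
have u2 : uniq s2.
  rewrite cat_uniq map_inj_in_uniq ?enum_uniq //=; last first.
    by move=> a b; rewrite !mem_enum; apply: phi_inj.
  rewrite andbT; apply/hasPn=> c; rewrite mem_enum inE => cq; apply/negP=> /mapP[a].
  by rewrite mem_enum => aV e; rewrite e Vq_img imset_f in cq.
pose tau a := nth a s2 (index a s1).
have tau_inj : injective tau.
  move=> a b; rewrite /tau.
  have ia : index a s1 < size s2 by rewrite sz2 -sz1 index_mem.
  have ib : index b s1 < size s2 by rewrite sz2 -sz1 index_mem.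
  rewrite (set_nth_default a b ib) => /eqP; rewrite nth_uniq // => /eqP e.
  by rewrite -(nth_index a (s1all a)) e nth_index.
apply/existsP; exists (perm tau_inj); apply/forallP=> h; apply/implyP=> hH.
rewrite permE /tau.
have hr : h r \in enum Vr by rewrite mem_enum; apply: imset_f.
rewrite index_cat hr nth_cat size_map index_mem hr.
rewrite (nth_map (h r)) ?index_mem // nth_index // phiE //.
Qed.

Lemma bin (A Q : finType) (H : {set {ffun Q -> A}}) (F : opfam A) n (i : 'I_n)
  (HI : Inv F H) (HD : Dprop F i) (n3 : 3 <= n) (r q : Q) :
  n <= #|Hq H r| -> n <= #|Hq H q| -> ~~ linked H r q ->
  forall a c, a \in Hq H r -> c \in Hq H q ->
  exists2 h, h \in H & h r = a /\ h q = c.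
Proof.
move=> nr nq nl a c aH cH.
case: (boolP [exists u in H, exists v in H, (u r == v r) && (u q != v q)]).
  case/exists_inP=> u uH /exists_inP[v vH /andP[/eqP e ne]].
  case/imsetP: aH => h0 h0H ->.
  have [|w wH [wS wq]] := @stepA _ _ _ _ _ _ HI HD n3 [set r] _ nq u v h0 c uH vH _ ne h0H cH.
  - by move=> x; rewrite inE => /eqP ->.
  by exists w => //; rewrite wS ?inE.
move=> N1.
case: (boolP [exists u in H, exists v in H, (u q == v q) && (u r != v r)]).
  case/exists_inP=> u uH /exists_inP[v vH /andP[/eqP e ne]].
  case/imsetP: cH => h0 h0H ->.
  have [|w wH [wS wq]] := @stepA _ _ _ _ _ _ HI HD n3 [set q] _ nr u v h0 a uH vH _ ne h0H aH.
  - by move=> x; rewrite inE => /eqP ->.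
  by exists w => //; split => //; rewrite wS ?inE.
move=> N2; case/negP: nl; apply: bij_linked => u v uH vH; split => e.
  have [//|ne] := eqVneq (u q) (v q); case/negP: N1.
  by apply/exists_inP; exists u => //; apply/exists_inP; exists v => //; rewrite e eqxx ne.
have [//|ne] := eqVneq (u r) (v r); case/negP: N2.
by apply/exists_inP; exists u => //; apply/exists_inP; exists v => //; rewrite e eqxx ne.
Qed.

Lemma exists_neq n (i : 'I_n) : 2 <= n -> exists j : 'I_n, j != i.
Proof.
move=> n2; have [j] : exists j : 'I_n, j \in [set~ i].
  by apply/set0Pn; rewrite -card_gt0 cardsC1 card_ord -ltnS prednK ?(leq_trans _ n2).
by rewrite !inE; exists j.
Qed.

Lemma mainM (A Q : finType) (H : {set {ffun Q -> A}}) (F : opfam A) n (i : 'I_n)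
  (HI : Inv F H) (HD : Dprop F i) (n3 : 3 <= n) :
  forall k (T : {set Q}), #|T| = k ->
  (forall r, r \in T -> n <= #|Hq H r|) ->
  (forall r q, r \in T -> q \in T -> r != q -> ~~ linked H r q) ->
  forall X : {set Q}, (forall x, x \in X -> #|Hq H x| < n) ->
  forall g : {ffun Q -> A}, (exists2 h, h \in H & forall x, x \in X -> h x = g x) ->
  (forall r, r \in T -> g r \in Hq H r) ->
  exists2 h, h \in H & forall x, x \in X :|: T -> h x = g x.
Proof.
elim=> [|k IH] T cT Tbig Tnl X Xsm g [h hH hX] gT.
  move/eqP: cT; rewrite cards_eq0 => /eqP ->.
  by exists h => // x; rewrite setU0; apply: hX.
have [q qT] : exists q, q \in T by apply/set0Pn; rewrite -card_gt0 cT.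
pose T0 := T :\ q.
have cT0 : #|T0| = k by apply/eqP; rewrite -eqSS -cT (cardsD1 q T) qT.
have nq := Tbig q qT.
have qX x : x \in X -> x != q.
  by move=> xX; apply/eqP=> e; have := Xsm x xX; rewrite e ltnNge nq.
have [u [v [uH vH uv duv]]] : exists u v, [/\ u \in H, v \in H,
    (forall x, x \in X :|: T0 -> u x = v x) & u q != v q].
  case: (eqVneq T0 set0) => [T00|].
    have [||a [ai aV _]] := @fill _ _ _ nq _ set0 (fun _ => g q) (erefl _).
    - by move=> x y; rewrite inE.
    - by move=> j; rewrite inE.
    pose U j := odflt h [pick h' in H | h' q == a j].
    have UH j : U j \in H /\ U j q = a j by apply: Hq_pick.
    have [j0 j0i] := exists_neq i (ltnW n3).
    have [|||w wH [wS wq]] := @coreN _ _ _ _ _ _ HI HD X q U _ _ _ j0.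
    - by move=> j; case: (UH j).
    - by move=> x y /=; rewrite (proj2 (UH x)) (proj2 (UH y)); apply: ai.
    - move=> x xX; apply: leq_ltn_trans (Xsm x xX).
      apply: subset_leq_card; apply/subsetP=> c /imsetP[j _ ->].
      by rewrite ffunE; apply: imset_f; case: (UH j).
    exists (U i), w; split => //; first by case: (UH i).
    + by move=> x; rewrite T00 setU0 => xX; rewrite wS.
    + by rewrite wq (proj2 (UH i)) (proj2 (UH j0)) (inj_eq ai) eq_sym.
  case/set0Pn=> r; rewrite !inE => /andP[rq rT].
  have rT0 : r \in T0 by rewrite !inE rq rT.
  have [c1 c1H /andP[c1h _]] := three_pick (h q) (h q) (leq_trans n3 nq).
  pose g1 := [ffun x => if x == q then c1 else h x].
  have [y1 y1H y1g] : exists2 y1, y1 \in H & forall x, x \in X :|: T :\ r -> y1 x = g1 x.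
    apply: (IH (T :\ r)).
    - by apply/eqP; rewrite -eqSS -cT (cardsD1 r T) rT.
    - by move=> r'; rewrite inE => /andP[_ /Tbig].
    - by move=> r1 r2; rewrite !inE => /andP[_ r1T] /andP[_ r2T]; apply: Tnl.
    - exact: Xsm.
    - by exists h => // x xX; rewrite ffunE (negbTE (qX x xX)).
    - move=> r'; rewrite inE ffunE => /andP[_ r'T].
      by case: ifP => [/eqP -> //|_]; apply: imset_f.
  have y1q : y1 q = c1 by rewrite y1g ?ffunE ?eqxx // !inE eq_sym rq qT orbT.
  have [c2 c2H /andP[c2h c21]] := three_pick (h q) c1 (leq_trans n3 nq).
  have [y2 y2H [y2r y2q]] := bin HI HD n3 (Tbig r rT) nq (Tnl r q rT qT rq)
     (imset_f _ hH : h r \in Hq H r) c2H.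
  have [||||w wH [wS wq]] := @core3 _ _ _ _ _ _ HI HD n3 (X :|: T0) _ nq _ _ _ hH y1H y2H _ _ _ _.
  - by rewrite y1q eq_sym.
  - by rewrite y2q eq_sym.
  - by rewrite y1q y2q eq_sym.
  - move=> x; case: (eqVneq x r) => [->|xr] xS; first by apply: Or32.
    apply: Or31; rewrite y1g ?ffunE.
      case: ifP => // /eqP e; move: xS; rewrite e !inE eqxx /= orbF => /qX.
      by rewrite eqxx.
    by move: xS; rewrite !inE xr /= => /orP[->//|/andP[_ ->]]; rewrite orbT.
  exists h, w; split => //; first by move=> x xS; rewrite wS.
  by rewrite wq y1q eq_sym.
have [||||h0 h0H h0X] := IH T0 cT0 _ _ X Xsm g _ _.
- by move=> r; rewrite inE => /andP[_ /Tbig].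
- by move=> r1 r2; rewrite !inE => /andP[_ r1T] /andP[_ r2T]; apply: Tnl.
- by exists h.
- by move=> r; rewrite inE => /andP[_ /gT].
have [w wH [wS wq]] := @stepA _ _ _ _ _ _ HI HD n3 (X :|: T0) _ nq u v h0 (g q)
   uH vH uv duv h0H (gT q qT).
exists w => // x; case: (eqVneq x q) => [->//|xq] xS.
rewrite wS ?h0X // !inE xq /=; by move: xS; rewrite !inE.
Qed.

Lemma restrP (A Q : finType) (R : {set Q}) (H : {set {ffun Q -> A}}) (f : {ffun Q -> A}) :
  reflect (exists2 h, h \in H & forall x, x \in R -> h x = f x)
          (restr R f \in restr_set R H).
Proof.
apply: (iffP imsetP).
  case=> h hH e; exists h => // x xR.
  by move/ffunP: e => /(_ (exist _ x xR)); rewrite !ffunE.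
case=> h hH e; exists h => //; apply/ffunP=> -[x xR]; rewrite !ffunE /=.
by rewrite e.
Qed.

Lemma linked_sym (A Q : finType) (H : {set {ffun Q -> A}}) r q :
  linked H r q -> linked H q r.
Proof.
case/existsP=> s /forallP hs; apply/existsP; exists (s^-1)%g; apply/forallP=> h.
apply/implyP=> hH; have := implyP (hs h) hH => /eqP ->; by rewrite permK.
Qed.

Lemma linked_trans (A Q : finType) (H : {set {ffun Q -> A}}) a b c :
  linked H a b -> linked H b c -> linked H a c.
Proof.
case/existsP=> s1 /forallP h1; case/existsP=> s2 /forallP h2.
apply/existsP; exists (s1 * s2)%g; apply/forallP=> h; apply/implyP=> hH.
by rewrite permM -(eqP (implyP (h1 h) hH)) (eqP (implyP (h2 h) hH)).
Qed.

Lemma linked_card (A Q : finType) (H : {set {ffun Q -> A}}) r q :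
  linked H r q -> #|Hq H q| = #|Hq H r|.
Proof.
case/existsP=> s /forallP hs.
have -> : Hq H q = s @: Hq H r.
  apply/setP=> c; apply/imsetP/imsetP.
    case=> h hH ->; exists (h r); first exact: imset_f.
    exact: eqP (implyP (hs h) hH).
  by case=> _ /imsetP[h hH ->] ->; exists h; rewrite // (eqP (implyP (hs h) hH)).
by rewrite card_imset //; apply: perm_inj.
Qed.

Definition reps (A Q : finType) (H : {set {ffun Q -> A}}) n : {set Q} :=
  [set q | (n <= #|Hq H q|) &&
     [forall q', (enum_rank q' < enum_rank q)%N ==> ~~ linked H q' q]].

Lemma reps_big (A Q : finType) (H : {set {ffun Q -> A}}) n r :
  r \in reps H n -> n <= #|Hq H r|.
Proof. by rewrite inE => /andP[]. Qed.

Lemma reps_nl (A Q : finType) (H : {set {ffun Q -> A}}) n r q :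
  r \in reps H n -> q \in reps H n -> r != q -> ~~ linked H r q.
Proof.
rewrite !inE => /andP[_ /forallP hr] /andP[_ /forallP hq] rq.
case: (ltngtP (enum_rank r) (enum_rank q)) => c.
- by have := hq r; rewrite c.
- apply/negP=> /linked_sym l; by have := hr q; rewrite c l.
- by exfalso; move/eqP: rq; apply; apply: enum_rank_inj; apply: val_inj.
Qed.

Lemma reps_cover (A Q : finType) (H : {set {ffun Q -> A}}) n q :
  n <= #|Hq H q| -> q \notin reps H n ->
  exists2 t, t \in reps H n & (t != q) && linked H t q.
Proof.
move=> nq qT.
pose C := [pred t | (t == q) || linked H t q].
have qC : C q by rewrite /C /= eqxx.
case: (arg_minnP (fun t => val (enum_rank t)) qC) => t tC tmin.
have tT : t \in reps H n.
  rewrite inE; apply/andP; split.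
    by case/orP: tC => [/eqP ->//|/linked_card <-].
  apply/forallP=> q'; apply/implyP=> lt; apply/negP=> l.
  have : C q'.
    rewrite /C /=; case/orP: tC => [/eqP e|lt']; first by rewrite -e l orbT.
    by rewrite (linked_trans l lt') orbT.
  by move/tmin; rewrite leqNgt lt.
exists t => //; case/orP: tC => [/eqP e|->]; first by rewrite -e tT in qT.
by rewrite andbT; apply/eqP=> e; rewrite -e tT in qT.
Qed.

Lemma inv_restr (A Q : finType) (F : opfam A) (H : {set {ffun Q -> A}}) (P : {set Q}) :
  H != set0 -> Inv F H -> Inv F (restr_set P H).
Proof.
case/set0Pn=> h0 h0H HI m f h fF hR.
pose g j := odflt h0 [pick h' in H | restr P h' == h j].
have gP j : g j \in H /\ restr P (g j) = h j.
  rewrite /g; case: pickP => [h' /andP[h'H /eqP]//|N].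
  case/imsetP: (hR j) => h' h'H e; have := N h'; by rewrite h'H e eqxx.
have kH := HI m f g fF (fun j => proj1 (gP j)).
apply/imsetP; exists [ffun q => f [ffun j => g j q]] => //.
apply/ffunP=> x; rewrite !ffunE; congr (f _); apply/ffunP=> j; rewrite !ffunE.
by rewrite -(proj2 (gP j)) ffunE.
Qed.

Lemma inv_decomp (A Q : finType) (F : opfam A) (H : {set {ffun Q -> A}}) (RR : {set {set Q}}) :
  (forall P, P \in RR -> Inv F (restr_set P H)) -> decomposable H RR -> Inv F H.
Proof.
move=> HR dec m f h fF hH; apply/dec => R RR_R.
have := HR R RR_R m f (fun j => restr R (h j)) fF (fun j => imset_f _ (hH j)).
suff -> : restr R [ffun q => f [ffun j => h j q]] =
    [ffun q => f [ffun j => restr R (h j) q]] by [].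
apply/ffunP=> x; rewrite !ffunE; congr (f _); apply/ffunP=> j.
by rewrite !ffunE.
Qed.

Theorem theorem2 (A Q : finType) (H : {set {ffun Q -> A}}) (n : nat)
  (F : opfam A) :
  0 < #|A| -> 0 < #|Q| -> H != set0 -> 3 <= n ->
  is_clone F -> Delta_s F n ->
  (Inv F H <->
   ((forall P, P \in decomp_family H n -> Inv F (restr_set P H)) /\
    decomposable H (decomp_family H n))).
Proof.
move=> _ _ Hne n3 _ [i HD]; split; last first.
  by case=> HR dec; apply: inv_decomp HR dec.
move=> HI; split; first by move=> P _; apply: inv_restr.
move=> f; split; first by move=> fH R _; apply: imset_f.
move=> hyp.
have fq q : f q \in Hq H q.
  have : [set q] \in decomp_family H n by rewrite !inE cards1 eqxx.
  case/hyp/restrP=> h hH e; apply/imsetP; exists h => //.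
  by rewrite e // inE.
have [h hH hf] : exists2 h, h \in H & forall x, x \in Qn H n :|: reps H n -> h x = f x.
  apply: (@mainM _ _ _ _ _ _ HI HD n3 _ (reps H n) (erefl _)).
  - exact: reps_big.
  - exact: reps_nl.
  - by move=> x; rewrite inE.
  - by apply/restrP/hyp; rewrite !inE eqxx orbT.
  - by move=> r _; apply: fq.
suff -> : f = h by [].
apply/ffunP=> x.
case: (boolP (x \in Qn H n :|: reps H n)) => [/hf -> //|].
rewrite in_setU negb_or => /andP[nx xT]; rewrite /Qn inE -leqNgt in nx.
have [t tT /andP[tx lt]] := reps_cover nx xT.
have : [set t; x] \in decomp_family H n.
  by rewrite !inE; apply/orP; left; apply/orP; right; apply/existsP; exists t;
     apply/existsP; exists x; rewrite tx eqxx.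
case/hyp/restrP=> h' h'H e.
case/existsP: lt => s /forallP hs.
have e1 : f x = h' x by rewrite e // !inE eqxx orbT.
have e2 : f t = h' t by rewrite e // !inE eqxx.
have e3 : h t = f t by apply: hf; rewrite in_setU tT orbT.
by rewrite e1 (eqP (implyP (hs h') h'H)) -e2 -e3 (eqP (implyP (hs h) hH)).
Qed.
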